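(* Let $\Lambda$ be a finite group generated by a symmetric subset $S\subset\Lambda$ with $\delta:=\big\|\frac1{|S|}\sum_{g\in S}\lambda^0(g)\big\|<1$. Suppose $(\alpha_g)_{g\in S}$ are complex numbers of modulus $1$ and $\xi\in\ell_2\Lambda$ is a unit vector such that $\varepsilon:=\max_{g\in S}\|\lambda(g)\xi-\alpha_g\xi\|>0$. Then there is a (unitary, one-dimensional) character $\chi$ of $\Lambda$ with $$\max_{g\in S}|\bar\chi(g)-\alpha_g|\le\Big(\frac{100\varepsilon}{1-\delta}\Big)^{1/2}.$$
   Context: $\lambda$ is the left regular representation of $\Lambda$ on $\ell_2\Lambda$ and $\lambda^0$ is its restriction to $\ell_2\Lambda\ominus\mathbb C\mathbf 1$ (the orthogonal complement of the constant functions). A character means a group homomorphism $\Lambda\to\{z\in\mathbb C:|z|=1\}$. *)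

(* Defs.v *)
From HB Require Import structures.
From mathcomp Require Import all_boot all_order all_algebra all_fingroup.
Set Implicit Arguments. Unset Strict Implicit. Unset Printing Implicit Defensive.
Import Order.TTheory GRing.Theory Num.Theory.
Local Open Scope ring_scope.

(* The finite group Lambda is the whole finGroupType gT; l2 Lambda is the
   space of functions gT -> C, C a numeric closed field (complex numbers). *)

Definition l2norm (C : numClosedFieldType) (gT : finGroupType) (v : gT -> C) : C :=
  sqrtC (\sum_(x : gT) `|v x| ^+ 2).

Definition lreg (C : numClosedFieldType) (gT : finGroupType) (g : gT) (v : gT -> C)
  : gT -> C := fun x => v (g^-1 * x)%g.

Definition orth_const (C : numClosedFieldType) (gT : finGroupType) (v : gT -> C) : Prop :=
  \sum_(x : gT) v x * (1 : C)^* = 0.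

Definition avg_op (C : numClosedFieldType) (gT : finGroupType) (S : {set gT})
  (v : gT -> C) : gT -> C :=
  fun x => #|S|%:R^-1 * \sum_(g in S) lreg g v x.

(* d bounds the operator norm of the averaging operator restricted to the
   orthogonal complement of the constants (i.e. of lambda^0 averaged) *)
Definition avg0_bound (C : numClosedFieldType) (gT : finGroupType) (S : {set gT})
  (d : C) : Prop :=
  forall v : gT -> C, orth_const v -> l2norm (avg_op S v) <= d * l2norm v.

Definition is_avg0_norm (C : numClosedFieldType) (gT : finGroupType) (S : {set gT})
  (delta : C) : Prop :=
  [/\ 0 <= delta, avg0_bound S delta &
      forall d : C, 0 <= d -> avg0_bound S d -> delta <= d].

Definition is_character (C : numClosedFieldType) (gT : finGroupType) (chi : gT -> C) : Prop :=
  (forall x y : gT, chi (x * y)%g = chi x * chi y) /\ (forall x : gT, `|chi x| = 1).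

(* Main.v *)
Require Import Defs.
From HB Require Import structures.
From mathcomp Require Import all_boot all_order all_algebra all_fingroup.
Import Order.TTheory GRing.Theory Num.Theory.
Local Open Scope ring_scope.

Module Helpers.
Set Implicit Arguments. Unset Strict Implicit. Unset Printing Implicit Defensive.

Section Basics.
Variable C : numClosedFieldType.
Variable T : finType.

Definition N2 (v : T -> C) : C := \sum_x `|v x| ^+ 2.
Definition dotf (a b : T -> C) : C := \sum_x a x * (b x)^*.

Lemma sumT_ord (F : T -> C) : \sum_x F x = \sum_(i < #|T|) F (enum_val i).
Proof. by rewrite -big_enum_val; apply: eq_bigl. Qed.

Lemma N2_ge0 v : 0 <= N2 v.
Proof. by apply: sumr_ge0 => x _; rewrite exprn_ge0. Qed.

Lemma N2_real v : N2 v \is Num.real.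
Proof. exact: ger0_real (N2_ge0 v). Qed.

Definition rowv (a : T -> C) : 'rV[C]_#|T| := \row_(i < #|T|) a (enum_val i).

Lemma dotmx_rowv a b : dotmx (rowv a) (rowv b) = dotf a b.
Proof.
rewrite dotmxE !mxE /dotf sumT_ord; apply: eq_bigr => i _.
by rewrite !mxE.
Qed.

Lemma dotf_self a : dotf a a = N2 a.
Proof. by apply: eq_bigr => x _; rewrite normCK. Qed.

Lemma CS (a b : T -> C) : `|dotf a b| <= sqrtC (N2 a) * sqrtC (N2 b).
Proof.
have := CauchySchwarz_sqrt (@dotmx C #|T|) (rowv a) (rowv b).
move=> H; rewrite -!dotf_self -!dotmx_rowv; exact: H.1.
Qed.
Lemma exch3 (I J K : finType) (F : I -> J -> K -> C) :
  \sum_i \sum_j \sum_k F i j k = \sum_k \sum_i \sum_j F i j k.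
Proof. under eq_bigr do rewrite exchange_big. by rewrite exchange_big. Qed.

Lemma CS2 (a b : T -> C) : `|dotf a b| ^+ 2 <= N2 a * N2 b.
Proof.
move: (CS a b); rewrite -ler_sqr ?nnegrE ?normr_ge0 ?mulr_ge0 ?sqrtC_ge0 ?N2_ge0 //.
by rewrite exprMn !sqrtCK.
Qed.

Lemma jensen (A : {pred T}) (b : T -> C) :
  `|\sum_(i in A) b i| ^+ 2 <= #|A|%:R * \sum_(i in A) `|b i| ^+ 2.
Proof.
have := CS2 (fun i => if i \in A then b i else 0) (fun i => if i \in A then 1 else 0).
have -> : dotf (fun i => if i \in A then b i else 0) (fun i => if i \in A then 1 else 0)
   = \sum_(i in A) b i.
  rewrite /dotf [RHS]big_mkcond /=; apply: eq_bigr => i _.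
  by case: (i \in A); rewrite ?rmorph1 ?mulr1 ?mul0r.
have -> : N2 (fun i => if i \in A then 1 else 0) = #|A|%:R.
  rewrite /N2 -sum1_card natr_sum [RHS]big_mkcond /=; apply: eq_bigr => i _.
  by case: (i \in A); rewrite ?normr1 ?expr1n ?normr0 ?expr0n.
have -> : N2 (fun i => if i \in A then b i else 0) = \sum_(i in A) `|b i| ^+ 2.
  rewrite /N2 [RHS]big_mkcond /=; apply: eq_bigr => i _.
  by case: (i \in A); rewrite ?normr0 ?expr0n.
by rewrite mulrC.
Qed.

Lemma sq_sum (F : T -> C) : `|\sum_x F x| ^+ 2 = \sum_x \sum_y F x * (F y)^*.
Proof.
rewrite normCK rmorph_sum mulr_suml; apply: eq_bigr => x _.
by rewrite mulr_sumr.
Qed.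

Lemma N2_sub_mean (F : T -> C) (m : C) : #|T|%:R * m = \sum_x F x ->
  N2 (fun x => F x - m) = N2 F - #|T|%:R * `|m| ^+ 2.
Proof.
move=> hm; rewrite /N2.
under eq_bigr do rewrite normCK rmorphB /= mulrBl !mulrBr.
rewrite !sumrB -!mulr_suml -!mulr_sumr -rmorph_sum -hm.
under [in \sum_x `|F x| ^+ 2]eq_bigr do rewrite normCK.
rewrite sumr_const normCK.
rewrite rmorphM /= conjC_nat -[m *+ _]mulr_natl [m * (_ * _)]mulrCA !mulrA.
by rewrite [X in _ - X]subrr subr0.
Qed.

End Basics.

Lemma ident (C : numClosedFieldType) (al a1 a2 b1 b2 : C) : al * al^* = 1 ->
  a1 * a2^* - b1 * b2^* = - (al * a1 * (b2 - al * a2)^* ) - (b1 - al * a1) * b2^*.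
Proof.
move=> h; rewrite rmorphB rmorphM /= mulrBr mulrBl opprB.
rewrite mulrACA h mul1r opprB.
by rewrite addrA subrK.
Qed.
Lemma normD2 (C : numClosedFieldType) (p q : C) : `|p + q| ^+ 2 <= 2%:R * (`|p| ^+ 2 + `|q| ^+ 2).
Proof.
have := @jensen C bool predT (fun i => if i then p else q).
rewrite !big_mkcond /= !big_bool /= => h; apply: le_trans h _; rewrite ler_wpM2r ?addr_ge0 ?exprn_ge0 // cardT enumT unlock /=. exact: lexx. Qed.



Section Spec.
Variable C : numClosedFieldType.
Variable gT : finGroupType.
Variable xi : gT -> C.
Local Notation n := #|gT|.
Local Open Scope sesquilinear_scope.

Lemma n_gt0 : (0 < n)%N.
Proof. by apply/card_gt0P; exists 1%g. Qed.

Lemma n_neq0 : n%:R != 0 :> C.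
Proof. by rewrite pnatr_eq0 -lt0n n_gt0. Qed.

Definition Mf (x y : gT) : C :=
  n%:R^-1 * \sum_(g : gT) (xi (g^-1 * x)%g)^* * xi (g^-1 * y)%g.
Definition appM (w : gT -> C) (y : gT) : C := \sum_x w x * Mf x y.

Definition Mm : 'M[C]_n := \matrix_(i, j) Mf (enum_val i) (enum_val j).

Lemma Mm_herm : Mm ^t* = Mm.
Proof.
apply/matrixP => i j; rewrite !mxE /Mf rmorphM /= rmorphV ?unitfE ?n_neq0 //=.
rewrite conjC_nat rmorph_sum /=; congr (_ * _); apply: eq_bigr => g _.
by rewrite rmorphM /= conjCK mulrC.
Qed.

Lemma Mm_normal : Mm \is normalmx.
Proof. by apply/normalmxP; rewrite Mm_herm. Qed.

Definition P := spectralmx Mm.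
Definition dd (i : 'I_n) := spectral_diag Mm 0 i.
Definition e (i : 'I_n) (x : gT) := P i (enum_rank x).

Lemma P_unitary : P \is unitarymx.
Proof. exact: spectral_unitarymx. Qed.

Lemma E1 i j : \sum_x e i x * (e j x)^* = (i == j)%:R.
Proof.
have /matrixP/(_ i j) := unitarymxP P_unitary.
rewrite !mxE => <-; rewrite sumT_ord; apply: eq_bigr => k _.
by rewrite /e enum_valK !mxE.
Qed.

Lemma E2 x y : \sum_i (e i x)^* * e i y = (x == y)%:R.
Proof.
have H : P ^t* *m P = 1%:M.
  by rewrite -invmx_unitary ?P_unitary // mulVmx // unitarymx_unit // P_unitary.
have /matrixP/(_ (enum_rank x) (enum_rank y)) := H.
rewrite !mxE (inj_eq enum_rank_inj) => <-; apply: eq_bigr => k _.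
by rewrite /e !mxE.
Qed.

Lemma E3 x y : Mf x y = \sum_i (e i x)^* * dd i * e i y.
Proof.
have := orthomx_spectralP Mm_normal.
rewrite -/P invmx_unitary ?P_unitary // => /matrixP/(_ (enum_rank x) (enum_rank y)).
rewrite !mxE !enum_rankK => ->; apply: eq_bigr => i _.
rewrite !mxE (bigD1 i) //= big1 => [|k /negbTE ki]; last by rewrite !mxE ?ki ?(eq_sym i) ?ki mulr0n mulr0.
by rewrite addr0 !mxE eqxx mulr1n /dd /e.
Qed.

Definition c (i : 'I_n) (w : gT -> C) := dotf w (e i).

Lemma sum_delta (w : gT -> C) y : \sum_x w x * (x == y)%:R = w y.
Proof.
rewrite (bigD1 y) //= eqxx mulr1 big1 ?addr0 // => x /negbTE ->.
by rewrite mulr0.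
Qed.

Lemma sum_delta_ord (w : 'I_n -> C) k : \sum_i w i * (i == k)%:R = w k.
Proof.
rewrite (bigD1 k) //= eqxx mulr1 big1 ?addr0 // => x /negbTE ->.
by rewrite mulr0.
Qed.

Lemma B1 w y : w y = \sum_i c i w * e i y.
Proof.
rewrite /c /dotf; under eq_bigr do rewrite mulr_suml.
rewrite exchange_big /= -[LHS](sum_delta w y); apply: eq_bigr => x _.
by rewrite -E2 mulr_sumr; apply: eq_bigr => i _; rewrite mulrA.
Qed.

Lemma B3 w y : appM w y = \sum_i c i w * dd i * e i y.
Proof.
rewrite /appM /c /dotf; under [RHS]eq_bigr do rewrite mulr_suml mulr_suml.
rewrite exchange_big /=; apply: eq_bigr => x _.
rewrite E3 mulr_sumr; apply: eq_bigr => i _; by rewrite !mulrA.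
Qed.

Lemma B4 k w : c k (appM w) = dd k * c k w.
Proof.
rewrite /c {1}/dotf; under eq_bigr do rewrite B3 mulr_suml.
rewrite exchange_big /= mulrC -(sum_delta_ord (fun i => c i w * dd i) k).
apply: eq_bigr => i _; rewrite -E1 mulr_sumr.
by apply: eq_bigr => x _; rewrite !mulrA.
Qed.

Lemma B5 j k : c k (e j) = (j == k)%:R.
Proof. exact: E1. Qed.

Lemma conj_c i w : (c i w)^* = \sum_x (w x)^* * e i x.
Proof.
rewrite /c /dotf rmorph_sum; apply: eq_bigr => x _.
by rewrite rmorphM /= conjCK.
Qed.

Lemma B2 w : \sum_i `|c i w| ^+ 2 = N2 w.
Proof.
transitivity (\sum_i c i w * (c i w)^*).
  by apply: eq_bigr => i _; rewrite normCK.
rewrite /N2; under eq_bigr do rewrite conj_c {1}/c /dotf mulr_suml.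
rewrite exchange_big /=; apply: eq_bigr => x _.
rewrite normCK -(sum_delta (fun y => w x * (w y)^*) x).
under eq_bigr do rewrite mulr_sumr.
rewrite exchange_big /=; apply: eq_bigr => y _.
rewrite eq_sym -E2 mulr_sumr; apply: eq_bigr => i _.
by rewrite mulrACA.
Qed.

Lemma B7 w : dotf (appM w) w = \sum_i dd i * `|c i w| ^+ 2.
Proof.
rewrite /dotf; under eq_bigr do rewrite B3 mulr_suml.
rewrite exchange_big /=; apply: eq_bigr => i _.
rewrite normCK conj_c !mulr_sumr; apply: eq_bigr => y _.
by rewrite [in RHS]mulrCA -!mulrA [e i y * _]mulrC.
Qed.

Lemma G w : dotf (appM w) w =
  n%:R^-1 * \sum_g `|dotf w (lreg g xi)| ^+ 2.
Proof.
rewrite /dotf /appM /Mf mulr_sumr.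
transitivity (\sum_y \sum_x \sum_g n%:R^-1 * (w x * (xi (g^-1 * x)%g)^* * (xi (g^-1 * y)%g * (w y)^* ))).
  apply: eq_bigr => y _; rewrite mulr_suml; apply: eq_bigr => x _.
  rewrite !mulr_sumr mulr_suml; apply: eq_bigr => g _.
  by rewrite mulrCA -!mulrA; congr (_ * _); rewrite !mulrA -mulrA mulrACA.
rewrite exch3; apply: eq_bigr => g _.
under eq_bigr do rewrite -mulr_sumr.
rewrite -mulr_sumr; congr (_ * _).
rewrite normCK mulr_suml exchange_big /=; apply: eq_bigr => x _.
rewrite rmorph_sum mulr_sumr; apply: eq_bigr => y _.
by rewrite /lreg rmorphM /= conjCK [_ * xi _]mulrC.
Qed.

Lemma trace_M : \sum_x Mf x x = \sum_i dd i.
Proof.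
under eq_bigr do rewrite E3.
rewrite exchange_big /=; apply: eq_bigr => i _.
have := E1 i i; rewrite eqxx mulr1n => h; rewrite -[RHS]mulr1 -h mulr_sumr; apply: eq_bigr => x _.
by rewrite [_ * dd i]mulrC -mulrA [_ * e i x]mulrC.
Qed.

Lemma trace_M1 : N2 xi = 1 -> \sum_x Mf x x = 1.
Proof.
move=> h; rewrite /Mf -mulr_sumr exchange_big /=.
transitivity (n%:R^-1 * \sum_(g : gT) (1 : C)).
  congr (_ * _); apply: eq_bigr => g _; rewrite -h /N2.
  rewrite (reindex_inj (mulgI g)%g) /=; apply: eq_bigr => x _.
  by rewrite mulKg normCK mulrC.
by rewrite sumr_const mulVf // n_neq0.
Qed.

Lemma Mf_comm g x y : Mf (g * x)%g y = Mf x (g^-1 * y)%g.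
Proof.
rewrite /Mf (reindex_inj (mulgI g)) /=; congr (_ * _); apply: eq_bigr => h _.
by rewrite !invMg -!mulgA mulKg.
Qed.

Lemma appM_lreg g w y : appM (lreg g w) y = appM w (g^-1 * y)%g.
Proof.
rewrite /appM (reindex_inj (mulgI g)) /=; apply: eq_bigr => x _.
by rewrite /lreg mulKg Mf_comm.
Qed.

Lemma eq_c k f h : (forall y, f y = h y) -> c k f = c k h.
Proof. by move=> E; apply: eq_bigr => x _; rewrite E. Qed.

Lemma c_scale k a f : c k (fun y => a * f y) = a * c k f.
Proof. by rewrite /c /dotf mulr_sumr; apply: eq_bigr => x _; rewrite mulrA. Qed.

Lemma c_subl k a f h : c k (fun y => f y - a * h y) = c k f - a * c k h.
Proof.
rewrite /c /dotf mulr_sumr -sumrB; apply: eq_bigr => x _.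
by rewrite mulrBl mulrA.
Qed.

Lemma N2_lreg (g : gT) (u : gT -> C) : N2 (lreg g u) = N2 u.
Proof.
rewrite /N2 (reindex_inj (mulgI g)) /=; apply: eq_bigr => x _.
by rewrite /lreg mulKg.
Qed.

Lemma lregM (g h : gT) (u : gT -> C) (y : gT) : lreg (g * h)%g u y = lreg h u (g^-1 * y)%g.
Proof. by rewrite /lreg invMg mulgA. Qed.

Lemma spec_char (s : C) : N2 xi = 1 -> 0 <= s -> s *+ 2 < 1 ->
  1 - s <= dotf (appM xi) xi ->
  exists beta : gT -> C,
    [/\ forall g h, beta (g * h)%g = beta g * beta h,
        forall g, `|beta g| = 1 &
        forall g a, (1 - s *+ 2) * `|beta g - a| ^+ 2
                    <= N2 (fun x => lreg g xi x - a * xi x)].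
Proof.
move=> hN hs0 hs hq.
have sR : s \is Num.real by apply: ger0_real.
have ddE k : dd k = dotf (appM (e k)) (e k).
  rewrite B7 (bigD1 k) //= big1 ?addr0 => [|i ik]; rewrite B5.
    by rewrite eqxx normr1 expr1n mulr1.
  by rewrite eq_sym (negbTE ik) normr0 expr0n /= mulr0.
have dd_ge0 k : 0 <= dd k.
  rewrite ddE G; apply: mulr_ge0; first by rewrite invr_ge0 ler0n.
  by apply: sumr_ge0 => g _; rewrite exprn_ge0.
have dd_real k : dd k \is Num.real by apply: ger0_real.
have sum_dd : \sum_i dd i = 1 by rewrite -trace_M trace_M1.
have pars : \sum_i `|c i xi| ^+ 2 = 1 by rewrite B2.
have qE := B7 xi.
have [j hj] : exists j, 1 - s <= dd j.
  case: (pickP (fun i => 1 - s <= dd i)) => [j hj|none]; first by exists j.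
  exfalso.
  have lt i : dd i < 1 - s by rewrite real_ltNge ?none ?rpredB ?rpred1.
  pose t i := (1 - s - dd i) * `|c i xi| ^+ 2.
  have t_ge0 i : 0 <= t i.
    by apply: mulr_ge0; [rewrite subr_ge0 ltW | rewrite exprn_ge0].
  have tsum : \sum_i t i = (1 - s) - dotf (appM xi) xi.
    rewrite qE /t; under eq_bigr do rewrite mulrBl.
    by rewrite sumrB -mulr_sumr pars mulr1.
  have /eqP tz : \sum_i t i == 0.
    by rewrite eq_le sumr_ge0 ?andbT // tsum subr_le0.
  have t0 := psumr_eq0P (fun i _ => t_ge0 i) tz.
  have : \sum_i `|c i xi| ^+ 2 == 0.
    rewrite psumr_eq0 //; last by move=> i _; rewrite exprn_ge0.
    apply/allP => i _; move: (t0 i isT); rewrite /t => /eqP.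
    by rewrite mulf_eq0 subr_eq0 eq_sym (lt_eqF (lt i)) orFb.
  by rewrite pars oner_eq0.
have hs1 : s < 1 - s by rewrite ltrBrDr -mulr2n.
have ddj1 : dd j <= 1.
  by rewrite -sum_dd (bigD1 j) //= lerDl sumr_ge0.
have ddk k : k != j -> dd k <= s.
  move=> kj; have : dd j + dd k <= 1.
    rewrite -sum_dd (bigD1 j) //= (bigD1 k) //= addrA lerDl sumr_ge0 //.
  rewrite -lerBrDl => h; apply: le_trans h _.
  by rewrite lerBlDr -lerBlDl.
have neq k : k != j -> dd k != dd j.
  move=> kj; apply/negbT/lt_eqF.
  exact: le_lt_trans (ddk k kj) (lt_le_trans hs1 hj).
have cj : 1 - s *+ 2 <= `|c j xi| ^+ 2.
  have rest : \sum_(i | i != j) `|c i xi| ^+ 2 <= 1.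
    by rewrite -pars [leRHS](bigD1 j) //= lerDr exprn_ge0.
  have : 1 - s <= `|c j xi| ^+ 2 + s.
    apply: (le_trans hq); rewrite qE (bigD1 j) //=; apply: lerD.
      by rewrite ler_piMl // exprn_ge0.
    apply: le_trans (_ : \sum_(i | i != j) s * `|c i xi| ^+ 2 <= _).
      by apply: ler_sum => i ij; apply: ler_wpM2r; rewrite ?exprn_ge0 ?ddk.
    by rewrite -mulr_sumr ler_piMr.
  by rewrite mulr2n opprD addrA !lerBlDr.
pose u := e j.
have uM y : appM u y = dd j * u y.
  rewrite B3 (bigD1 j) //= big1 ?addr0 => [|k kj].
    by rewrite B5 eqxx mul1r.
  by rewrite B5 eq_sym (negbTE kj) mul0r mul0r.
have ck g k : k != j -> c k (lreg g u) = 0.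
  move=> kj; have h1 := B4 k (lreg g u).
  have h2 : c k (appM (lreg g u)) = dd j * c k (lreg g u).
    by rewrite -c_scale; apply: eq_c => y; rewrite appM_lreg uM.
  case: (eqVneq (c k (lreg g u)) 0) => // cn0; exfalso.
  move/negP: (neq k kj); apply; apply/eqP.
  by apply: (mulIf cn0); rewrite -h1 h2.
have eig g y : lreg g u y = c j (lreg g u) * u y.
  rewrite [LHS](B1 (lreg g u) y) (bigD1 j) //= big1 ?addr0 // => k kj.
  by rewrite ck // mul0r.
pose beta g := c j (lreg g u).
have [y0 uy0] : exists y0, u y0 != 0.
  case: (pickP (fun y => u y != 0)) => [y hy|none]; first by exists y.
  have := E1 j j; rewrite eqxx big1 => [|x _]; last first.
    by move/negbT: (none x); rewrite negbK => /eqP; rewrite /u => ->; rewrite mul0r.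
  by move/eqP; rewrite eq_sym oner_eq0.
have bM g h : beta (g * h)%g = beta g * beta h.
  apply: (mulIf uy0); rewrite -eig lregM eig.
  change (u (g^-1 * y0)%g) with (lreg g u y0); rewrite eig.
  by rewrite mulrA [beta h * _]mulrC.
have bN g : `|beta g| = 1.
  have := B2 (lreg g u); rewrite N2_lreg -B2.
  rewrite [LHS](bigD1 j) //= big1 ?addr0 => [|k kj]; last by rewrite ck // normr0 expr0n.
  rewrite [RHS](bigD1 j) //= big1 ?addr0 => [|k kj]; last first.
    by rewrite B5 eq_sym (negbTE kj) normr0 expr0n.
  rewrite B5 eqxx normr1 expr1n => /eqP; rewrite sqrp_eq1 //; exact/eqP.
have b1 : beta 1%g = 1.
  have bn0 : beta 1%g != 0 by rewrite -normr_eq0 bN oner_eq0.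
  by apply: (mulfI bn0); rewrite -bM mulg1 mulr1.
have bV g : beta (g^-1)%g = (beta g)^*.
  have bn0 : beta g != 0 by rewrite -normr_eq0 bN oner_eq0.
  apply: (mulfI bn0); rewrite -bM mulgV b1.
  by rewrite -normCK bN expr1n.
exists beta; split => // g a.
have cl : c j (lreg g xi) = beta g * c j xi.
  rewrite /c /dotf (reindex_inj (mulgI g)) /= mulr_sumr; apply: eq_bigr => x _.
  rewrite /lreg mulKg.
  have -> : e j (g * x)%g = beta (g^-1)%g * u x.
    by rewrite -eig /lreg invgK.
  by rewrite bV rmorphM /= conjCK mulrCA.
have cw : c j (fun x => lreg g xi x - a * xi x) = (beta g - a) * c j xi.
  by rewrite c_subl cl mulrBl.
have : `|c j (fun x => lreg g xi x - a * xi x)| ^+ 2 <=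
       N2 (fun x => lreg g xi x - a * xi x).
  by rewrite -B2 (bigD1 j) //= lerDl sumr_ge0 // => i _; rewrite exprn_ge0.
rewrite cw normrM exprMn; apply: le_trans.
by rewrite mulrC ler_wpM2l ?exprn_ge0.
Qed.

End Spec.


Section Gap.
Variable C : numClosedFieldType.
Variable gT : finGroupType.
Variable S : {set gT}.

Lemma gap_vec (d : C) : 0 <= d -> d <= 1 -> avg0_bound S d -> forall v : gT -> C, orth_const v ->
  (1 - d) ^+ 2 * N2 v <= N2 (fun x => v x - avg_op S v x).
Proof.
move=> d0 d1 hb v hv; have hA := hb v hv; rewrite /l2norm in hA.
set A := avg_op S v in hA *; set D := fun x => v x - A x.
set l := sqrtC (N2 v) in hA *; set lD := sqrtC (N2 D).
have lsq : l ^+ 2 = N2 v by apply: sqrtCK.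
have lDsq : lD ^+ 2 = N2 D by apply: sqrtCK.
have l0 : 0 <= l by rewrite sqrtC_ge0 N2_ge0.
have lD0 : 0 <= lD by rewrite sqrtC_ge0 N2_ge0.
have spl : N2 v = dotf D v + dotf A v.
  rewrite -dotf_self /dotf -big_split /=; apply: eq_bigr => x _.
  by rewrite /= -mulrDl /D subrK.
have key : l * l <= lD * l + d * l * l.
  rewrite -expr2 lsq; apply: le_trans (real_ler_norm (N2_real v)) _.
  rewrite {1}spl; apply: le_trans (ler_normD _ _) _; apply: lerD; first exact: CS.
  by apply: le_trans (CS _ _) _; rewrite ler_wpM2r.
have key2 : (1 - d) * l * l <= lD * l.
  by rewrite !mulrBl !mul1r lerBlDr.
have [lz|lnz] := eqVneq l 0.
  have -> : N2 v = 0 by rewrite -lsq lz expr0n.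
  by rewrite mulr0 N2_ge0.
have lpos : 0 < l by rewrite lt_def lnz l0.
have k3 : (1 - d) * l <= lD by rewrite -(ler_pM2r lpos).
rewrite -lsq -lDsq -exprMn.
have h : 0 <= (1 - d) * l by rewrite mulr_ge0 // subr_ge0.
by rewrite ler_sqr ?nnegrE.
Qed.

Lemma eq_N2 (f g : gT -> C) : (forall x, f x = g x) -> N2 f = N2 g.
Proof. by move=> E; apply: eq_bigr => x _; rewrite E. Qed.

Definition fh (xi : gT -> C) (h x : gT) := xi x * (xi (x * h)%g)^*.

Lemma A1 xi : dotf (appM xi xi) xi = #|gT|%:R^-1 * \sum_h `|\sum_x fh xi h x| ^+ 2.
Proof.
rewrite G; congr (_ * _); rewrite /dotf /fh.
under eq_bigr do rewrite sq_sum.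
under [RHS]eq_bigr do rewrite sq_sum.
rewrite [RHS]exchange_big /=.
transitivity (\sum_x \sum_y \sum_g (xi x * (xi y)^* ) *
    ((xi (g^-1 * x)%g) * (xi (g^-1 * y)%g)^* )^* ); last first.
  apply: eq_bigr => x _; rewrite [RHS](reindex_inj (mulgI x^-1)%g) /=.
  apply: eq_bigr => y _.
  have inj : injective (fun g : gT => (g^-1 * x)%g).
    by move=> g1 g2 /mulIg /invg_inj.
  rewrite [RHS](reindex_inj inj) /=; apply: eq_bigr => g _.
  by rewrite mulVKg mulgA mulgK.
rewrite -exch3; apply: eq_bigr => x _; apply: eq_bigr => y _; apply: eq_bigr => g _.
by rewrite /lreg !rmorphM /= !conjCK mulrACA.
Qed.

Lemma A2 xi : N2 xi = 1 -> \sum_h N2 (fh xi h) = 1.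
Proof.
move=> hN; rewrite /N2 exchange_big /= -[RHS]hN; apply: eq_bigr => x _.
rewrite /fh; under eq_bigr do rewrite normrM norm_conjC exprMn.
rewrite -mulr_sumr -[RHS]mulr1 -hN; congr (_ * _).
rewrite (reindex_inj (mulgI x^-1)%g) /=; apply: eq_bigr => h _.
by rewrite mulVKg.
Qed.

Lemma avg_sub_const (F : gT -> C) m x : (0 < #|S|)%N ->
  avg_op S (fun y => F y - m) x = avg_op S F x - m.
Proof.
move=> s0; rewrite /avg_op /lreg sumrB sumr_const mulrBr -[m *+ _]mulr_natl mulrA.
by rewrite mulVf ?mul1r // pnatr_eq0 -lt0n.
Qed.

Lemma A6 (F : gT -> C) : (0 < #|S|)%N ->
  N2 (fun x => F x - avg_op S F x) <=
  #|S|%:R^-1 * \sum_(g in S) N2 (fun x => F x - lreg g F x).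
Proof.
move=> s0; have sn0 : #|S|%:R != 0 :> C by rewrite pnatr_eq0 -lt0n.
have pw x : F x - avg_op S F x = #|S|%:R^-1 * \sum_(g in S) (F x - lreg g F x).
  by rewrite sumrB sumr_const mulrBr /avg_op -[F x *+ _]mulr_natl mulrA mulVf // mul1r.
rewrite (eq_N2 pw) /N2 exchange_big /= mulr_sumr; apply: ler_sum => x _.
rewrite normrM exprMn normfV normr_nat.
apply: le_trans (ler_wpM2l _ (jensen _ _)) _.
  by rewrite exprn_ge0 // invr_ge0 ler0n.
rewrite mulrA; apply: ler_wpM2r; first by rewrite sumr_ge0 // => g _; rewrite exprn_ge0.
by rewrite expr2 -mulrA mulVf // mulr1.
Qed.


Lemma sum_prod (u v : gT -> C) :
  \sum_x \sum_y u x * v y = (\sum_x u x) * (\sum_y v y).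
Proof. by rewrite mulr_suml; apply: eq_bigr => x _; rewrite mulr_sumr. Qed.

Lemma A7 xi (al : C) (g : gT) (e2 : C) : N2 xi = 1 -> al * al^* = 1 ->
  N2 (fun x => lreg g xi x - al * xi x) <= e2 ->
  \sum_h N2 (fun x => fh xi h x - lreg g (fh xi h) x) <= 4%:R * e2.
Proof.
move=> hN ha hr.
set b := lreg g xi; set r := fun x => b x - al * xi x.
have hb : N2 b = 1 by rewrite /b N2_lreg.
have hal : `|al| ^+ 2 = 1 by rewrite normCK.
have E : \sum_h N2 (fun x => fh xi h x - lreg g (fh xi h) x) =
    \sum_x \sum_y `|xi x * (xi y)^* - b x * (b y)^*| ^+ 2.
  rewrite /N2 exchange_big /=; apply: eq_bigr => x _.
  rewrite (reindex_inj (mulgI x^-1)%g) /=; apply: eq_bigr => y _.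
  by rewrite /fh /b /lreg mulVKg mulgA mulgK.
rewrite E.
apply: le_trans (_ : \sum_x \sum_y (2%:R * (`|xi x| ^+ 2 * `|r y| ^+ 2 +
                     `|r x| ^+ 2 * `|b y| ^+ 2)) <= _).
  apply: ler_sum => x _; apply: ler_sum => y _.
  rewrite (ident _ _ _ _ ha); apply: le_trans (normD2 _ _) _.
  by rewrite !normrN !normrM !norm_conjC !exprMn hal mul1r.
under eq_bigr do rewrite -mulr_sumr.
rewrite -mulr_sumr.
under eq_bigr do rewrite big_split.
rewrite big_split /= !sum_prod -/(N2 xi) -/(N2 r) -/(N2 b) hN hb mul1r mulr1.
rewrite mulrDr -mulrDl -natrD.
by apply: le_trans (ler_wpM2l (ler0n _ (2 + 2)) hr) _.
Qed.


Lemma gap_total (d e2 : C) (xi alpha : gT -> C) : 0 <= d -> d <= 1 -> avg0_bound S d ->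
  (0 < #|S|)%N -> N2 xi = 1 ->
  (forall g, g \in S -> alpha g * (alpha g)^* = 1) ->
  (forall g, g \in S -> N2 (fun x => lreg g xi x - alpha g * xi x) <= e2) ->
  (1 - d) ^+ 2 * (1 - dotf (appM xi xi) xi) <= 4%:R * e2.
Proof.
move=> d0 d1 hb s0 hN hal he.
have nn0 := n_neq0 C gT.
have sn0 : #|S|%:R != 0 :> C by rewrite pnatr_eq0 -lt0n.
pose m h := #|gT|%:R^-1 * \sum_x fh xi h x.
pose v h x := fh xi h x - m h.
have hmean h : #|gT|%:R * m h = \sum_x fh xi h x by rewrite /m mulVKf.
have Eq : 1 - dotf (appM xi xi) xi = \sum_h N2 (v h).
  rewrite A1; under [RHS]eq_bigr do rewrite (N2_sub_mean (hmean _)).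
  rewrite sumrB (A2 hN); congr (_ - _); rewrite mulr_sumr; apply: eq_bigr => h _.
  rewrite /m normrM exprMn normfV normr_nat expr2 !mulrA mulfV // mul1r.
  by [].
have orth h : orth_const (v h).
  rewrite /orth_const /v; under eq_bigr do rewrite rmorph1 mulr1.
  by rewrite sumrB sumr_const -hmean -[m h *+ _]mulr_natl subrr.
have step h : (1 - d) ^+ 2 * N2 (v h) <= N2 (fun x => fh xi h x - avg_op S (fh xi h) x).
  have -> : N2 (fun x => fh xi h x - avg_op S (fh xi h) x) =
            N2 (fun x => v h x - avg_op S (v h) x).
    by apply: eq_N2 => x; rewrite /v avg_sub_const // opprB addrA subrK.
  by have H := gap_vec d0 d1 hb (orth h); exact: H.
rewrite (_ : 1 - dotf (appM xi xi) xi = \sum_h N2 (v h)); last exact: Eq.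
rewrite mulr_sumr.
apply: le_trans (ler_sum _ (fun h _ => step h)) _.
apply: le_trans (ler_sum _ (fun h _ => A6 (fh xi h) s0)) _.
rewrite -mulr_sumr exchange_big /=.
apply: le_trans (ler_wpM2l _ (ler_sum _ (fun g gS => A7 hN (hal g gS) (he g gS)))) _.
  by rewrite invr_ge0 ler0n.
by rewrite sumr_const -(mulr_natl (4%:R * e2)) mulKf.
Qed.

End Gap.


Section Arith.
Variable R : numFieldType.

Lemma ar_t1 (t : R) : 0 <= t -> 100%:R * t < 4%:R -> t <= 1.
Proof.
move=> t0 h; apply: ltW; rewrite -(ltr_pM2l (_ : 0 < 100%:R)) ?ltr0n // mulr1.
by apply: lt_le_trans h _; rewrite ler_nat.
Qed.

Lemma ar_8t (t : R) : 0 <= t -> 100%:R * t < 4%:R -> 8%:R * t < 1.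
Proof.
move=> t0 h; rewrite -(ltr_pM2l (_ : 0 < 100%:R)) ?ltr0n // mulr1 mulrCA.
apply: (@lt_le_trans _ _ (8%:R * 4%:R)); first by rewrite ltr_pM2l ?ltr0n.
by rewrite -natrM ler_nat.
Qed.

Lemma ar_sig (t : R) : 0 <= t -> 100%:R * t < 4%:R -> (4%:R * t ^+ 2) *+ 2 < 1.
Proof.
move=> t0 h; have t1 := ar_t1 t0 h; have h8 := ar_8t t0 h.
apply: le_lt_trans h8; rewrite -mulr_natr -mulrA mulrC -!mulrA mulrA -natrM.
rewrite mulrC mulrA; apply: ler_piMr => //.
by rewrite mulr_ge0 // ler0n.
Qed.

Lemma ar_fin (t D y : R) : 0 <= t -> 0 < D -> D <= 1 -> 100%:R * t < 4%:R ->
  0 <= y -> y <= 4%:R ->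
  (1 - (4%:R * t ^+ 2) *+ 2) * y <= (t * D) ^+ 2 -> y <= 100%:R * t.
Proof.
move=> t0 D0 D1 h y0 y4 H; have t1 := ar_t1 t0 h.
have e8 : (4%:R * t ^+ 2) *+ 2 = 8%:R * t ^+ 2 :> R.
  by rewrite -mulrnAl -mulrnA.
rewrite e8 mulrBl mul1r in H.
have H2 : y <= t ^+ 2 + 8%:R * t ^+ 2 * y.
  rewrite -lerBlDr; apply: le_trans H _.
  by rewrite exprMn ler_piMr ?exprn_ge0 // exprn_ile1 // ltW.
apply: le_trans H2 _.
apply: le_trans (_ : t ^+ 2 + 8%:R * t ^+ 2 * 4%:R <= _).
  by rewrite lerD2l ler_wpM2l // mulr_ge0 ?ler0n ?exprn_ge0.
apply: le_trans (_ : 33%:R * t <= _); last by rewrite ler_wpM2r // ler_nat.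
rewrite mulrAC -natrM -[X in X + _]mul1r -mulrDl nat1r.
rewrite expr2 mulrA; apply: ler_piMr => //.
by rewrite mulr_ge0 // ler0n.
Qed.

End Arith.

End Helpers.
Import Helpers.


Theorem lemmaA4 (C : numClosedFieldType) (gT : finGroupType) (S : {set gT})
  (hgen : <<S>>%g = [set: gT])
  (hsym : forall g : gT, g \in S -> (g^-1)%g \in S)
  (delta : C) (hdelta : is_avg0_norm S delta) (hdelta1 : delta < 1)
  (alpha : gT -> C) (halpha : forall g : gT, g \in S -> `|alpha g| = 1)
  (xi : gT -> C) (hxi : l2norm xi = 1)
  (eps : C)
  (heps_ub : forall g : gT, g \in S ->
     l2norm (fun x => lreg g xi x - alpha g * xi x) <= eps)
  (heps_att : exists2 g : gT, g \in S &
     l2norm (fun x => lreg g xi x - alpha g * xi x) = eps)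
  (heps_pos : 0 < eps) :
  exists chi : gT -> C, is_character chi /\
    forall g : gT, g \in S ->
      `|(chi g)^* - alpha g| <= sqrtC (100%:R * eps / (1 - delta)).
Proof.
case: hdelta => d0 hb _.
have d1 : delta <= 1 by apply: ltW.
have D0 : 0 < 1 - delta by rewrite subr_gt0.
have s0 : (0 < #|S|)%N by case: heps_att => g gS _; apply/card_gt0P; exists g.
have hN : N2 xi = 1 by rewrite -[N2 xi]sqrtCK; move: hxi; rewrite /l2norm => ->; rewrite expr1n.
have hal g : g \in S -> alpha g * (alpha g)^* = 1.
  by move=> gS; rewrite -normCK halpha // expr1n.
have he g : g \in S -> N2 (fun x => lreg g xi x - alpha g * xi x) <= eps ^+ 2.
  move=> gS; have h := heps_ub g gS; rewrite /l2norm in h.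
  by rewrite -(sqrtCK (N2 _)) ler_sqr ?nnegrE ?sqrtC_ge0 ?N2_ge0 ?(ltW heps_pos).
have gap := gap_total d0 d1 hb s0 hN hal he.
set t := eps / (1 - delta).
have t0 : 0 < t by rewrite divr_gt0.
have eq_eps : eps = t * (1 - delta) by rewrite /t mulfVK // lt0r_neq0.
have hB : 100%:R * eps / (1 - delta) = 100%:R * t by rewrite /t mulrA.
rewrite hB.
have Breal : 100%:R * t \is Num.real by apply: ger0_real; rewrite mulr_ge0 ?ler0n ?ltW.
case: (boolP (4%:R <= 100%:R * t)) => hcase.
  exists (fun _ => 1); split.
    by split => [x y|x]; rewrite ?mulr1 ?normr1.
  move=> g gS; rewrite conjC1.
  apply: le_trans (_ : sqrtC (4%:R) <= _); last by rewrite ler_sqrtC ?nnegrE ?ler0n // mulr_ge0 ?ler0n ?ltW.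
  have -> : sqrtC 4%:R = 2%:R :> C.
    by rewrite -(sqrCK (ler0n C 2)) -natrX.
  apply: le_trans (ler_normB _ _) _.
  by rewrite normr1 halpha // -natrD.
have h100 : 100%:R * t < 4%:R.
  by rewrite real_ltNge ?realn.
pose sg := 4%:R * t ^+ 2.
have sg0 : 0 <= sg by rewrite mulr_ge0 ?ler0n ?exprn_ge0 ?ltW.
have sg1 : sg *+ 2 < 1 by apply: ar_sig => //; apply: ltW.
have hq : 1 - sg <= dotf (appM xi xi) xi.
  have D2 : 0 < (1 - delta) ^+ 2 by rewrite exprn_gt0.
  have : (1 - delta) ^+ 2 * (1 - dotf (appM xi xi) xi) <= (1 - delta) ^+ 2 * sg.
    apply: le_trans gap _; rewrite eq_eps exprMn /sg mulrA [_ * (1 - delta) ^+ 2]mulrC.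
    by rewrite mulrA.
  by rewrite ler_pM2l // lerBlDr lerBlDl addrC.
have [beta [bM bN bF]] := spec_char hN sg0 sg1 hq.
exists (fun g => (beta g)^*); split.
  by split => [x y|x]; rewrite ?bM ?rmorphM // norm_conjC bN.
move=> g gS; rewrite conjCK.
set y := `|beta g - alpha g| ^+ 2.
have y0 : 0 <= y by rewrite exprn_ge0.
have y4 : y <= 4%:R.
  have : `|beta g - alpha g| <= 2%:R.
    by apply: le_trans (ler_normB _ _) _; rewrite bN halpha // -natrD.
  rewrite -(ler_sqr) ?nnegrE ?ler0n // -natrX => h; exact: h.
have Hy : (1 - sg *+ 2) * y <= (t * (1 - delta)) ^+ 2.
  by apply: le_trans (bF g (alpha g)) _; rewrite -eq_eps he.
have D1 : 1 - delta <= 1 by rewrite lerBlDr lerDl.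
have := ar_fin (ltW t0) D0 D1 h100 y0 y4 Hy.
rewrite -[`|beta g - alpha g|]sqrCK ?normr_ge0 // -/y => hy.
by rewrite ler_sqrtC ?nnegrE // mulr_ge0 ?ler0n ?ltW.
Qed.
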